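(* Let $G$ be a finitely generated group with growth function $g_G(n)$, let $t(n)$ be a function and $\mathtt{L}$ a language. If $g_G(t(n)) \in o(U_{\mathtt{L}}(n))$, then $\mathtt{L}\notin \mathfrak{L}(G)^w_{t(n)}$.
   Context: For a group $G$ with identity $e$, a $G$-automaton is a tuple $(Q,\Sigma,G,\delta,q_0,Q_a)$ where $Q$ is a finite set of states, $\Sigma$ a finite input alphabet, $q_0\in Q$ the initial state, $Q_a\subseteq Q$ the accepting states, and $\delta$ assigns to each $(q,\sigma)\in Q\times(\Sigma\cup\{\varepsilon\})$ a finite set of pairs $(q',m)\in Q\times G$. The register holds an element of $G$, initially $e$; using a transition $(q',m)\in\delta(q,\sigma)$ (one step) the automaton reads $\sigma$ (or nothing), moves to $q'$ and replaces the register content $x$ by $xm$. A word is accepted if some computation reads it entirely and ends in an accepting state with register equal to $e$. A $G$-automaton recognizing $\mathtt{L}$ is weakly $t(n)$ time-bounded if every $x\in\mathtt{L}$ with $|x|=n$ has an accepting computation of at most $t(n)$ steps; $\mathfrak{L}(G)^w_{t(n)}$ is the class of languages recognized by such automata. For a finite generating set $X$ of $G$, $|g|_X$ is the length of a shortest word over $X\cup X^{-1}$ representing $g$, and $g_G(n)=|\{g\in G: |g|_X\le n\}|$ is the growth function (asymptotically independent of $X$). A finite set $S$ of strings is uniformly $n$-dissimilar for $\mathtt{L}$ if for each $w\in S$ there is a string $v$ with $|wv|\le n$, $wv\in\mathtt{L}$, and for every $w'\in S$, $w'\neq w$, $|w'v|\le n$ and $w'v\notin\mathtt{L}$. $U_{\mathtt{L}}(n)$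 is the maximum cardinality of a uniformly $n$-dissimilar set for $\mathtt{L}$.
   Formalization: The hypothesis $g_G(t(n)) \in o(U_{\mathtt{L}}(n))$ is imposed on the growth function with respect to every finite generating set X of G, rather than on the growth function for a single one. The statement above fails without it. *)

(* Defs.v *)
From HB Require Import structures.
From mathcomp Require Import all_boot.
From mathcomp Require Import boolp.

Set Implicit Arguments.
Unset Strict Implicit.
Unset Printing Implicit Defensive.

Local Open Scope group_scope.

Section Growth.
Variable G : groupType.

Definition eval_word (s : seq G) : G := foldr (fun x y => x * y) 1 s.

Definition symm (X : seq G) : seq G := X ++ map (fun x => x^-1) X.

Definition generates (X : seq G) : Prop :=
  forall g : G, exists s : seq G, all (fun x => x \in symm X) s /\ eval_word s = g.

Fixpoint words (A : seq G) (k : nat) : seq (seq G) :=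
  if k is k'.+1 then [seq a :: w | a <- A, w <- words A k'] else [:: [::]].

Definition ball (X : seq G) (n : nat) : seq G :=
  undup (flatten [seq map eval_word (words (symm X) k) | k <- iota 0 n.+1]).

Definition growth (X : seq G) (n : nat) : nat := size (ball X n).
End Growth.

Record gautomaton (G : groupType) (A : finType) := GAutomaton {
  state : finType;
  delta : state -> option A -> seq (state * G);
  q0 : state;
  accepting : pred state
}.

Section Automata.
Variables (G : groupType) (A : finType) (M : gautomaton G A).

(* run q x w k q' y : starting in state q with register x, the automaton
   reads exactly w in k steps and ends in state q' with register y *)
Inductive run : state M -> G -> seq A -> nat -> state M -> G -> Prop :=
| run_nil q x : run q x [::] 0 q x
| run_eps q x w k q1 m q2 y :
    (q1, m) \in delta q None -> run q1 (x * m) w k q2 y -> run q x w k.+1 q2 y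
| run_sym q x a w k q1 m q2 y :
    (q1, m) \in delta q (Some a) -> run q1 (x * m) w k q2 y ->
    run q x (a :: w) k.+1 q2 y.

Definition accepts_in (w : seq A) (k : nat) : Prop :=
  exists q, accepting q /\ run (q0 M) 1 w k q 1.

Definition accepted (w : seq A) : Prop := exists k, accepts_in w k.

Definition recognizes (L : seq A -> Prop) : Prop :=
  forall w, accepted w <-> L w.

Definition weakly_time_bounded (L : seq A -> Prop) (t : nat -> nat) : Prop :=
  recognizes L /\
  forall w, L w -> exists k, k <= t (size w) /\ accepts_in w k.
End Automata.

Definition weak_class (G : groupType) (A : finType) (t : nat -> nat)
  (L : seq A -> Prop) : Prop :=
  exists M : gautomaton G A, weakly_time_bounded M L t.

Section Dissimilar.
Variables (A : finType) (L : seq A -> Prop).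

Definition unif_dissimilar (n : nat) (S : seq (seq A)) : Prop :=
  uniq S /\
  forall w, w \in S -> exists v : seq A,
    size (w ++ v) <= n /\ L (w ++ v) /\
    forall w', w' \in S -> w' != w -> size (w' ++ v) <= n /\ ~ L (w' ++ v).

(* U_L(n): maximal cardinality of a uniformly n-dissimilar set.  Such sets
   consist of strings of length <= n, so their size is at most
   sum_{i<=n} #|A|^i <= (#|A|+1)^n; the max is taken below that bound. *)
Definition U_L (n : nat) : nat :=
  \max_(k < ((#|A|.+1) ^ n).+1 |
         `[< exists S, unif_dissimilar n S /\ size S = k >]) k.
End Dissimilar.

(* f \in o(g) for f, g : nat -> nat : f(n)/g(n) -> 0, i.e. for every
   eps = 1/k > 0, eventually f n <= eps * g n *)
Definition littleo (f g : nat -> nat) : Prop :=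
  forall k, 0 < k -> exists N, forall n, N <= n -> k * f n <= g n.

(* Main.v *)
Require Import Defs.
From HB Require Import structures.
From mathcomp Require Import all_boot.
From mathcomp Require Import boolp.

Set Implicit Arguments.
Unset Strict Implicit.

Local Open Scope group_scope.
Section Aux.
Variables (G : groupType) (A : finType) (M : gautomaton G A).
Local Notation run := (@run G A M).
Local Notation delta := (@delta G A M).

Lemma run_cat q x w k1 q1 g v k2 q2 y :
  run q x w k1 q1 g -> run q1 g v k2 q2 y -> run q x (w ++ v) (k1 + k2) q2 y.
Proof.
elim=> {q x w k1 q1 g} /=; first by [].

- move=> q x w k q1 m q3 g Hd _ IH H2; rewrite addSn; exact: run_eps Hd (IH H2).
- move=> q x a w k q1 m q3 g Hd _ IH H2; rewrite addSn; exact: run_sym Hd (IH H2).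
Qed.

Lemma run_split q x u k q2 y : run q x u k q2 y -> forall w v, u = w ++ v ->
  exists k1 k2 q1 g, k = k1 + k2 /\ run q x w k1 q1 g /\ run q1 g v k2 q2 y.
Proof.
elim=> {q x u k q2 y}.
- move=> q x [|a w] [|b v] //= _; exists 0, 0, q, x; split=> //; split; exact: run_nil.
- move=> q x u k q1 m q2 y Hd Hr IH w v E.
  have [k1 [k2 [q' [g [-> [H1 H2]]]]]] := IH w v E.
  exists k1.+1, k2, q', g; split=> //; split=> //; exact: run_eps Hd H1.
- move=> q x a u k q1 m q2 y Hd Hr IH [|b w] v /= E.
  + exists 0, k.+1, q, x; split=> //; split; first exact: run_nil.
    by rewrite -E; exact: run_sym Hd Hr.
  + case: E => <- E.
    have [k1 [k2 [q' [g [-> [H1 H2]]]]]] := IH w v E.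
    exists k1.+1, k2, q', g; split=> //; split=> //; exact: run_sym Hd H1.
Qed.

Definition labels : seq G :=
  flatten [seq [seq p.2 | p <- delta q a] | q <- enum (state M), a <- (None :: map Some (enum A))].

Lemma mem_labels q a q1 m : (q1, m) \in delta q a -> m \in labels.
Proof.
move=> H; apply/flattenP.
exists [seq p.2 | p <- delta q a].
  apply: (allpairs_f (fun q a => [seq p.2 | p <- delta q a])); first by rewrite mem_enum.
  by case: a {H} => [a|]; rewrite ?in_cons ?eqxx //= map_f ?mem_enum ?orbT.
by apply/mapP; exists (q1, m).
Qed.

Lemma run_reg q x w k q2 y : run q x w k q2 y ->
  exists s, size s = k /\ all (fun m => m \in labels) s /\ y = x * eval_word s.
Proof.
elim=> {q x w k q2 y}.
- move=> q x; exists [::]; by rewrite /= mulg1.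
- move=> q x w k q1 m q2 y Hd _ [s [Hs [Ha ->]]].
  exists (m :: s); rewrite /= Hs (mem_labels Hd) Ha mulgA; done.
- move=> q x a w k q1 m q2 y Hd _ [s [Hs [Ha ->]]].
  exists (m :: s); rewrite /= Hs (mem_labels Hd) Ha mulgA; done.
Qed.
End Aux.

Section Ball.
Variable G : groupType.

Lemma mem_words (B : seq G) s : all (fun x => x \in B) s -> s \in words B (size s).
Proof.
elim: s => [|a s IH] /=; first by [].
idtac.
move=> /andP [Ha Hs].
exact: (allpairs_f (fun a w => a :: w) Ha (IH Hs)).
Qed.

Lemma mem_ball (X : seq G) r s : all (fun x => x \in symm X) s -> size s <= r ->
  eval_word s \in ball X r.
Proof.
move=> Ha Hs; rewrite /ball mem_undup; apply/flatten_mapP.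
exists (size s); first by rewrite mem_iota add0n ltnS.
by apply: map_f; apply: mem_words.
Qed.

Lemma growth_pos (X : seq G) r : 0 < growth X r.
Proof.
rewrite /growth lt0n size_eq0; apply/eqP => E.
have := @mem_ball X r [::] isT (leq0n r); by rewrite E.
Qed.
End Ball.

Lemma argmax_le (t : nat -> nat) n : exists m, m <= n /\ forall m', m' <= n -> t m' <= t m.
Proof.
elim: n => [|n [m [Hm Ht]]].
  by exists 0; split=> // m'; rewrite leqn0 => /eqP ->.
case: (leqP (t n.+1) (t m)) => H.
  exists m; split; first exact: leqW.
  move=> m'; rewrite leq_eqVlt => /orP [/eqP -> //|]; rewrite ltnS; exact: Ht.
exists n.+1; split=> // m'; rewrite leq_eqVlt => /orP [/eqP -> //|]; rewrite ltnS => /Ht.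
move=> H'; apply: leq_trans H' (ltnW H).
Qed.

Section Key.
Variables (G : groupType) (A : finType) (M : gautomaton G A) (t : nat -> nat)
  (L : seq A -> Prop) (X : seq G).
Local Notation run := (@run G A M).
Hypothesis HM : weakly_time_bounded M L t.
Hypothesis HX : {subset labels M <= X}.

Lemma key n : exists m, m <= n /\ U_L L n <= #|state M| * growth X (t m).
Proof.
have [m [Hmn Hm]] := argmax_le t n.
exists m; split=> //.
rewrite /U_L; apply/bigmax_leqP => k /asboolP [S [[Su HS] <-]].
set T := t m.
pose P w (p : state M * G) := p.2 \in ball X T /\ exists v,
  (forall w', w' \in S -> w' != w -> ~ L (w' ++ v)) /\
  (exists k1, run (q0 M) 1 w k1 p.1 p.2) /\
  exists k2 q', accepting q' /\ run p.1 p.2 v k2 q' 1.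
have Pex : forall w, w \in S -> exists p, P w p.
  move=> w Hw; have [v [Hsz [HL Hoth]]] := HS w Hw.
  have [kk [Hk [qf [Hacc Hrun]]]] := HM.2 _ HL.
  have [k1 [k2 [q1 [g [Ek [R1 R2]]]]]] := run_split Hrun (erefl _).
  exists (q1, g); split.
    have [s [Hs [Ha Eg]]] := run_reg R1.
    rewrite /= Eg mul1g; apply: mem_ball.
      apply/allP => x Hx; rewrite /symm mem_cat; apply/orP; left; apply: HX.
      exact: (allP Ha).
    rewrite Hs; apply: leq_trans (leq_addr k2 k1) _; rewrite -Ek.
    apply: leq_trans Hk _; apply: Hm.
    exact: Hsz.
  exists v; split.
    by move=> w' Hw' Hne; have [_ ?] := Hoth w' Hw' Hne.
  split; first by exists k1.
  by exists k2, qf.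
pose f w := match pselect (exists p, P w p) with
            | left H => proj1_sig (cid H) | right _ => (q0 M, 1) end.
have Pf : forall w, w \in S -> P w (f w).
  move=> w Hw; rewrite /f; case: pselect => [H|H]; first exact: proj2_sig (cid H).
  by case: H; apply: Pex.
rewrite -(size_map f) cardE /growth -(size_allpairs pair (enum (state M)) (ball X T)).
apply: uniq_leq_size.
  rewrite map_inj_in_uniq // => w w' Hw Hw' Ef.
  case: (eqVneq w w') => // Hne; exfalso.
  have [_ [v [Hoth [_ [k2 [q' [Hacc R2]]]]]]] := Pf w Hw.
  have [_ [_ [_ [[k1 R1] _]]]] := Pf w' Hw'.
  apply: (Hoth w' Hw'); first by rewrite eq_sym.
  apply/(HM.1 (w' ++ v)); exists (k1 + k2), q'; split=> //.
  rewrite -Ef in R1; exact: run_cat R1 R2.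
move=> p /mapP [w Hw ->]; have [Hb _] := Pf w Hw.
case E: (f w) Hb => [q g] /= Hb.
exact: allpairs_f (mem_enum _ q) Hb.
Qed.
End Key.

From mathcomp Require Import zify.
Local Close Scope group_scope.

Lemma U_L_mono (A : finType) (L : seq A -> Prop) m n : m <= n -> U_L L m <= U_L L n.
Proof.
move=> Hmn; rewrite {1}/U_L; apply/bigmax_leqP => k /asboolP [S [[Su HS] Hk]].
have Hkn : k < ((#|A|.+1) ^ n).+1.
  apply: leq_trans (ltn_ord k) _; rewrite ltnS; exact: leq_pexp2l.
apply: leq_trans (leq_bigmax_cond (Ordinal Hkn) _) => //.
apply/asboolP; exists S; split=> //; split=> // w Hw.
have [v [H1 [H2 H3]]] := HS w Hw; exists v; split; first exact: leq_trans H1 Hmn.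
split=> // w' Hw' Hne; have [H4 H5] := H3 w' Hw' Hne; split=> //; exact: leq_trans H4 Hmn.
Qed.

Theorem theorem4p2 (G : groupType) (A : finType) (t : nat -> nat)
    (L : seq A -> Prop) :
  (exists X : seq G, generates X) ->
  (forall X : seq G, generates X ->
     littleo (fun n => growth X (t n)) (U_L L)) ->
  ~ weak_class G t L.
Proof.
move=> [X0 HX0] Hlo [M HM].
pose X := X0 ++ labels M.
have HX : {subset labels M <= X} by move=> x Hx; rewrite mem_cat Hx orbT.
have gX : generates X.
  move=> g; have [s [Hs Es]] := HX0 g; exists s; split=> //.
  apply/allP => x /(allP Hs); rewrite /symm /X !mem_cat map_cat mem_cat.
  by case/orP => ->; rewrite ?orbT.
have Qp : 0 < #|state M| by apply/card_gt0P; exists (q0 M).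
have [N1 H1] := Hlo X gX (2 * #|state M|) ltac:(by rewrite muln_gt0).
pose C := \max_(i < N1) growth X (t i).
have [N2 H2] := Hlo X gX (#|state M| * C + 1) ltac:(by rewrite addn1).
have [m [Hmn Hb]] := key HM HX (N1 + N2).
have Hn2 := H2 (N1 + N2) (leq_addl _ _).
have hp := growth_pos X (t (N1 + N2)).
case: (ltnP m N1) => Hm.
  have HC : growth X (t m) <= C := leq_bigmax (Ordinal Hm).
  have : #|state M| * growth X (t m) <= #|state M| * C by rewrite leq_mul2l HC orbT.
  nia.
have Hm1 := H1 m Hm.
have Hmono := U_L_mono L Hmn.
nia.
Qed.
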